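(* Let $N\subseteq QI(\mathbb{R}_{+})$ be the set of classes $[f]$ of quasi-isometries $f$ of $\mathbb{R}_+$ satisfying $\lim_{x\to\infty} f(x)/x=1$. Then $N$ is a normal subgroup of $QI(\mathbb{R}_{+})$ and the center of the quotient group $QI(\mathbb{R}_{+})/N$ is trivial.
   Context: $\mathbb{R}_+=[0,\infty)$ with the Euclidean metric $d$. A quasi-isometry of a metric space $(X,d)$ is a map $f:X\to X$ for which there are constants $\mu\ge1$, $\delta>0$, $M>0$ with $\mu^{-1}d(x,y)-\delta\le d(f(x),f(y))\le \mu d(x,y)+\delta$ for all $x,y\in X$ and every point of $X$ within distance $M$ of $f(X)$. Two maps $f,g:X\to X$ are equivalent if $\sup_x d(f(x),g(x))<\infty$; $[f]$ denotes the class of $f$, and $QI(X)$ is the group of classes of quasi-isometries of $X$ under $[f][g]=[f\circ g]$. (The condition $\lim f(x)/x=1$ depends only on the class $[f]$.) *)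

(* Defs.v *)
From Stdlib Require Import Reals.
From Coquelicot Require Import Coquelicot.
Open Scope R_scope.

(* Maps of R_+ = [0,oo) are represented by functions R -> R; only their
   values on [0,oo) matter, and they must send [0,oo) into [0,oo). *)

Definition is_QI (f : R -> R) : Prop :=
  (forall x, 0 <= x -> 0 <= f x) /\
  exists mu delta M : R, 1 <= mu /\ 0 < delta /\ 0 < M /\
    (forall x y, 0 <= x -> 0 <= y ->
       / mu * Rabs (x - y) - delta <= Rabs (f x - f y) /\
       Rabs (f x - f y) <= mu * Rabs (x - y) + delta) /\
    (forall y, 0 <= y -> exists x, 0 <= x /\ Rabs (f x - y) <= M).

(* f ~ g : sup_{x in R_+} |f x - g x| < oo  (so [f] = [g]). *)
Definition qi_equiv (f g : R -> R) : Prop :=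
  exists C : R, forall x, 0 <= x -> Rabs (f x - g x) <= C.

Definition qi_inverse (g f : R -> R) : Prop :=
  is_QI g /\ qi_equiv (fun x => g (f x)) (fun x => x)
          /\ qi_equiv (fun x => f (g x)) (fun x => x).

Definition inN (f : R -> R) : Prop :=
  is_QI f /\ is_lim (fun x => f x / x) p_infty 1.

(* Main.v *)
Require Import Defs.
From Stdlib Require Import Reals Lra Psatz.
From Coquelicot Require Import Coquelicot.
Open Scope R_scope.

Lemma lim1_iff (F : R -> R) :
  is_lim F p_infty 1 <-> forall eps, 0 < eps -> exists X, forall x, X < x -> Rabs (F x - 1) < eps.
Proof.
  rewrite <- is_lim_spec. unfold is_lim'. simpl. split.
  - intros H eps Heps. exact (H (mkposreal eps Heps)).
  - intros H eps. destruct eps as [e He]. simpl. apply H; auto.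
Qed.

Lemma mkQI (f : R -> R) mu d M :
  (forall x, 0 <= x -> 0 <= f x) -> 1 <= mu -> 0 <= d -> 0 <= M ->
  (forall x y, 0 <= x -> 0 <= y ->
       / mu * Rabs (x - y) - d <= Rabs (f x - f y) /\
       Rabs (f x - f y) <= mu * Rabs (x - y) + d) ->
  (forall y, 0 <= y -> exists x, 0 <= x /\ Rabs (f x - y) <= M) -> is_QI f.
Proof.
  intros H0 Hmu Hd HM Hl Hs. split; auto.
  exists mu, (d+1), (M+1). repeat split; try lra.
  - destruct (Hl x y) as [A B]; auto. lra.
  - destruct (Hl x y) as [A B]; auto. lra.
  - intros y Hy. destruct (Hs y Hy) as [x [Hx Hx']]. exists x. split; auto. lra.
Qed.

Lemma QI_comp f g : is_QI f -> is_QI g -> is_QI (fun x => f (g x)).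
Proof.
  intros [Hf0 [mf [df [Mf [Hmf [Hdf [HMf [Hlf Hsf]]]]]]]]
         [Hg0 [mg [dg [Mg [Hmg [Hdg [HMg [Hlg Hsg]]]]]]]].
  apply (mkQI _ (mf*mg) (mf*dg+df) (mf*Mg + df + Mf)); auto; try nra.
  - intros x y Hx Hy.
    destruct (Hlg x y Hx Hy) as [A B].
    destruct (Hlf (g x) (g y) (Hg0 x Hx) (Hg0 y Hy)) as [C D].
    assert (0 < /mf) by (apply Rinv_0_lt_compat; lra).
    assert (/mf <= 1) by (rewrite <- Rinv_1; apply Rinv_le_contravar; lra).
    assert (0 <= Rabs (x-y)) by apply Rabs_pos.
    rewrite Rinv_mult. split.
    + assert (/mf * (/mg * Rabs (x-y) - dg) <= /mf * Rabs (g x - g y)) by (apply Rmult_le_compat_l; lra).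
      nra.
    + assert (mf * Rabs (g x - g y) <= mf * (mg * Rabs (x-y) + dg)) by (apply Rmult_le_compat_l; lra).
      nra.
  - intros y Hy. destruct (Hsf y Hy) as [x1 [Hx1 H1]].
    destruct (Hsg x1 Hx1) as [x [Hx H2]]. exists x. split; auto.
    destruct (Hlf (g x) x1 (Hg0 x Hx) Hx1) as [_ D].
    assert (mf * Rabs (g x - x1) <= mf * Mg) by (apply Rmult_le_compat_l; lra).
    replace (f (g x) - y) with ((f (g x) - f x1) + (f x1 - y)) by ring.
    eapply Rle_trans. apply Rabs_triang. lra.
Qed.

Lemma QI_id : is_QI (fun x => x).
Proof.
  apply (mkQI _ 1 0 0); try lra; [intros; lra| |].
  - intros x y _ _. rewrite Rinv_1. lra.
  - intros y Hy. exists y. split; auto. replace (y-y) with 0 by ring. rewrite Rabs_R0. lra.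
Qed.

Lemma abs_lt u e : Rabs u < e <-> -e < u < e.
Proof. unfold Rabs; destruct (Rcase_abs u); split; intros; lra. Qed.
Lemma abs_le u e : Rabs u <= e <-> -e <= u <= e.
Proof. unfold Rabs; destruct (Rcase_abs u); split; intros; lra. Qed.

Lemma div_lt a b x : 0 < x -> a < b * x -> a / x < b.
Proof. intros Hx H. apply Rmult_lt_reg_r with x; auto.
  unfold Rdiv; rewrite Rmult_assoc, Rinv_l; lra. Qed.
Lemma div_le a b x : 0 < x -> a <= b * x -> a / x <= b.
Proof. intros Hx H. apply Rmult_le_reg_r with x; auto.
  unfold Rdiv; rewrite Rmult_assoc, Rinv_l; lra. Qed.
Lemma le_div a b x : 0 < x -> b * x <= a -> b <= a / x.
Proof. intros Hx H. apply Rmult_le_reg_r with x; auto.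
  unfold Rdiv; rewrite Rmult_assoc, Rinv_l; lra. Qed.
Lemma lt_div a b x : 0 < x -> b * x < a -> b < a / x.
Proof. intros Hx H. apply Rmult_lt_reg_r with x; auto.
  unfold Rdiv; rewrite Rmult_assoc, Rinv_l; lra. Qed.

Lemma QI_lip f : is_QI f -> exists mu d, 1 <= mu /\ 0 < d /\
  forall x y, 0 <= x -> 0 <= y -> Rabs (f x - f y) <= mu * Rabs (x - y) + d.
Proof.
  intros [_ [mu [d [M [H1 [H2 [H3 [H4 _]]]]]]]]. exists mu, d; repeat split; auto.
  intros x y Hx Hy; apply (H4 x y Hx Hy).
Qed.

Lemma QI_upper f : is_QI f -> exists mu K, 1 <= mu /\ 0 <= K /\ forall x, 0 <= x -> f x <= mu * x + K.
Proof.
  intros Hf. pose proof (proj1 Hf) as H0. destruct (QI_lip f Hf) as [mu [d [Hmu [Hd H]]]].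
  exists mu, (f 0 + d). pose proof (H0 0 (Rle_refl 0)). repeat split; try lra.
  intros x Hx. specialize (H x 0 Hx (Rle_refl 0)). rewrite Rminus_0_r, (Rabs_pos_eq x) in H by lra.
  apply abs_le in H. lra.
Qed.

Lemma QI_growth f : is_QI f -> exists m X, 1 <= m /\ 0 < X /\
  forall x, X <= x -> x / m <= f x <= m * x.
Proof.
  intros [H0 [mu [d [M [Hmu [Hd [HM [Hl _]]]]]]]].
  pose proof (H0 0 (Rle_refl 0)) as Hf0.
  exists (2*mu), (2*mu*(f 0 + d) + 1). split; [nra|]. split; [nra|].
  intros x Hx. specialize (Hl x 0). rewrite Rminus_0_r in Hl.
  assert (Hx0 : 0 <= x) by nra. destruct (Hl Hx0 (Rle_refl 0)) as [A B].
  rewrite (Rabs_pos_eq x) in A, B by lra. split.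
  - pose proof (H0 x Hx0).
    assert (0 < /mu) by (apply Rinv_0_lt_compat; lra).
    assert (Hmm : mu * /mu = 1) by (field; lra).
    apply div_le; [lra|].
    destruct (Rle_dec (f 0) (f x)).
    + rewrite Rabs_pos_eq in A by lra. nra.
    + rewrite Rabs_left1 in A by lra. nra.
  - apply abs_le in B. nra.
Qed.

Lemma lim_bnd F : is_lim F p_infty 1 -> exists X, forall x, X < x -> 1/2 < F x < 3/2.
Proof. intros H. rewrite lim1_iff in H. destruct (H (1/2)) as [X HX]; [lra|].
  exists X; intros x Hx; specialize (HX x Hx); apply abs_lt in HX; lra. Qed.

Lemma part1 f g : inN f -> is_QI g -> qi_equiv g f -> inN g.
Proof.
  intros [_ Hf] Hg [C HC]. split; auto. apply lim1_iff; intros eps He.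
  rewrite lim1_iff in Hf. destruct (Hf (eps/2)) as [X HX]; [lra|].
  assert (C0 : 0 <= C) by (eapply Rle_trans; [apply Rabs_pos|apply (HC 0); lra]).
  exists (Rmax X (2*C/eps + 1)). intros x Hx.
  assert (x > X) by (eapply Rle_lt_trans; [apply Rmax_l|eauto]).
  assert (x > 2*C/eps+1) by (eapply Rle_lt_trans; [apply Rmax_r|eauto]).
  assert (Hxp : 0 < x). { assert (0 <= 2*C/eps) by (apply Rmult_le_pos; [lra| apply Rlt_le, Rinv_0_lt_compat; lra]). lra. }
  specialize (HX x H). specialize (HC x (Rlt_le _ _ Hxp)).
  replace (g x / x - 1) with ((f x / x - 1) + (g x - f x) / x) by (field; lra).
  eapply Rle_lt_trans. apply Rabs_triang.
  assert (Rabs ((g x - f x) / x) < eps / 2).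
  { unfold Rdiv at 1. rewrite Rabs_mult, Rabs_inv, (Rabs_pos_eq x) by lra.
    apply div_lt; auto. assert (2*C/eps * eps = 2*C) by (field; lra). nra. }
  lra.
Qed.

Lemma part2 : inN (fun x => x).
Proof.
  split. apply QI_id. apply lim1_iff. intros eps He. exists 1. intros x Hx.
  replace (x/x - 1) with 0 by (field; lra). rewrite Rabs_R0; lra.
Qed.

Lemma max_lt a b x : Rmax a b < x -> a < x /\ b < x.
Proof. intros H. split; eapply Rle_lt_trans; eauto; [apply Rmax_l|apply Rmax_r]. Qed.

Lemma part3 f g : inN f -> inN g -> inN (fun x => f (g x)).
Proof.
  intros [Hfq Hf] [Hgq Hg]. split. apply QI_comp; auto.
  rewrite lim1_iff; intros eps He.
  destruct (lim_bnd _ Hg) as [X1 H1].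
  rewrite lim1_iff in Hg, Hf. destruct (Hg (eps/3)) as [X2 H2]; [lra|].
  destruct (Hf (eps/3)) as [Y HY]; [lra|].
  exists (Rmax (Rmax X1 X2) (Rmax (2*Y) 1)). intros x Hx.
  apply max_lt in Hx as [Ha Hb]. apply max_lt in Ha as [Ha1 Ha2]. apply max_lt in Hb as [Hb1 Hb2].
  specialize (H1 x Ha1). specialize (H2 x Ha2).
  assert (Hgx : g x = (g x / x) * x) by (field; lra).
  set (b := g x / x) in *.
  assert (Y < g x) by nra.
  specialize (HY (g x) H).
  replace (f (g x) / x - 1) with ((f (g x) / g x) * b - 1) by (unfold b; field; split; nra).
  set (a := f (g x) / g x) in *.
  apply abs_lt in H2. apply abs_lt in HY. apply abs_lt. split; nra.
Qed.

Lemma part4 f g : inN f -> qi_inverse g f -> inN g.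
Proof.
  intros [Hfq Hf] [Hgq [_ [C HC]]]. split; auto.
  destruct (QI_upper f Hfq) as [mu [K [Hmu [HK Hup]]]].
  assert (C0 : 0 <= C) by (eapply Rle_trans; [apply Rabs_pos|apply (HC 0); lra]).
  rewrite lim1_iff; intros eps He.
  destruct (lim_bnd _ Hf) as [Y1 H1].
  rewrite lim1_iff in Hf. destruct (Hf (eps/4)) as [Y2 H2]; [lra|].
  exists (Rmax (Rmax (4*C/eps) 1) (mu * (Rabs Y1 + Rabs Y2) + C + K)). intros x Hx.
  apply max_lt in Hx as [Ha Hb]. apply max_lt in Ha as [Ha1 Ha2].
  assert (Hx0 : 0 <= x) by lra.
  pose proof (proj1 Hgq x Hx0) as Hg0.
  specialize (HC x Hx0). pose proof (Hup (g x) Hg0) as Hu.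
  apply abs_le in HC.
  assert (HY1 : Y1 <= Rabs Y1) by apply RRle_abs.
  assert (HY2 : Y2 <= Rabs Y2) by apply RRle_abs.
  assert (0 <= Rabs Y1) by apply Rabs_pos. assert (0 <= Rabs Y2) by apply Rabs_pos.
  assert (Hgl : Rabs Y1 + Rabs Y2 < g x) by nra.
  specialize (H1 (g x) ltac:(lra)). specialize (H2 (g x) ltac:(lra)).
  assert (Hp : Rabs (f (g x) / x - 1) < eps/4).
  { replace (f (g x) / x - 1) with ((f (g x) - x) / x) by (field; lra).
    apply abs_lt. assert (4*C/eps * eps = 4*C) by (field; lra). split.
    - apply lt_div; nra.
    - apply div_lt; nra. }
  assert (Hq : f (g x) = (f (g x) / g x) * g x) by (field; lra).
  replace (g x / x - 1) with ((f (g x) / x - f (g x) / g x) * / (f (g x) / g x)).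
  2:{ field. repeat split; nra. }
  set (p := f (g x) / x) in *. set (q := f (g x) / g x) in *.
  assert (0 < /q) by (apply Rinv_0_lt_compat; lra).
  assert (/q < 2). { apply Rmult_lt_reg_r with q. lra. rewrite Rinv_l by lra. lra. }
  apply abs_lt in Hp. apply abs_lt in H2. apply abs_lt.
  split; nra.
Qed.

Lemma N_sublin h : inN h -> forall e, 0 < e -> exists B, 0 <= B /\
  forall y, 0 <= y -> Rabs (h y - y) <= e * y + B.
Proof.
  intros [Hq Hl] e He. destruct (QI_lip h Hq) as [mu [d [Hmu [Hd Hli]]]].
  rewrite lim1_iff in Hl. destruct (Hl e He) as [Y HY].
  exists ((mu + 1) * Rabs Y + d + Rabs (h 0)). pose proof (Rabs_pos Y). pose proof (Rabs_pos (h 0)).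
  split. nra.
  intros y Hy. destruct (Rle_dec y (Rabs Y)).
  - specialize (Hli y 0 Hy (Rle_refl 0)). rewrite Rminus_0_r, (Rabs_pos_eq y) in Hli by lra.
    apply abs_le in Hli. pose proof (RRle_abs (h 0)). pose proof (Rabs_maj2 (h 0)).
    apply abs_le. split; nra.
  - assert (Y < y) by (pose proof (RRle_abs Y); lra).
    specialize (HY y H1). apply abs_lt in HY.
    replace (h y - y) with ((h y / y - 1) * y) by (field; lra).
    apply abs_le. split; nra.
Qed.

Lemma part5 f f' h : is_QI f -> qi_inverse f' f -> inN h -> inN (fun x => f (h (f' x))).
Proof.
  intros Hfq [Hf'q [_ [C HC]]] Hh.
  split. apply QI_comp; auto. apply QI_comp; auto. apply Hh.
  destruct (QI_lip f Hfq) as [mu [d [Hmu [Hd Hli]]]].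
  destruct (QI_upper f' Hf'q) as [mu' [K [Hmu' [HK Hup]]]].
  assert (C0 : 0 <= C) by (eapply Rle_trans; [apply Rabs_pos|apply (HC 0); lra]).
  rewrite lim1_iff; intros eps He.
  assert (He0 : 0 < eps / (2*mu*mu')).
  { apply Rdiv_lt_0_compat; nra. }
  destruct (N_sublin h Hh (eps / (2*mu*mu')) He0) as [B [HB HhB]].
  set (e := eps / (2*mu*mu')) in *.
  assert (Hee : e * (2*mu*mu') = eps) by (unfold e; field; lra).
  clearbody e.
  assert (HD : 0 <= mu * e * K + mu * B + d + C) .
  { assert (0 <= mu * e) by nra. assert (0 <= mu * e * K) by (apply Rmult_le_pos; lra). nra. }
  remember (mu * e * K + mu * B + d + C) as D eqn:HDdef.
  exists (Rmax (2 * D / eps) 1). intros x Hx. apply max_lt in Hx as [Ha Hb].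
  assert (Hx0 : 0 <= x) by lra.
  pose proof (proj1 Hf'q x Hx0) as Hy0.
  pose proof (proj1 (proj1 Hh) (f' x) Hy0) as Hhy0.
  specialize (HC x Hx0). specialize (Hup x Hx0). specialize (HhB (f' x) Hy0).
  specialize (Hli _ _ Hhy0 Hy0).
  assert (Hmain : Rabs (f (h (f' x)) - x) <= mu * (e * f' x + B) + d + C).
  { replace (f (h (f' x)) - x) with ((f (h (f' x)) - f (f' x)) + (f (f' x) - x)) by ring.
    eapply Rle_trans. apply Rabs_triang.
    assert (mu * Rabs (h (f' x) - f' x) <= mu * (e * f' x + B)) by (apply Rmult_le_compat_l; lra).
    lra. }
  assert (Hm2 : Rabs (f (h (f' x)) - x) <= eps / 2 * x + D).
  { eapply Rle_trans. apply Hmain. rewrite HDdef.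
    assert (mu * e * f' x <= mu * e * (mu' * x + K)) by (apply Rmult_le_compat_l; nra).
    assert (mu * e * mu' = eps / 2) by (rewrite <- Hee; field). nra. }
  replace (f (h (f' x)) / x - 1) with ((f (h (f' x)) - x) / x) by (field; lra).
  unfold Rdiv at 1. rewrite Rabs_mult, Rabs_inv, (Rabs_pos_eq x) by lra.
  apply div_lt; [lra|].
  assert (2 * D / eps * eps = 2 * D) by (field; lra). nra.
Qed.
Definition gw (w th : R) (y : R) := y * (1 + /8 * sin (w * ln y - th)).

Lemma gw_deriv w th c : 0 < c ->
  derivable_pt_lim (gw w th) c (1 + /8 * sin (w * ln c - th) + /8 * w * cos (w * ln c - th)).
Proof.
  intros Hc. apply is_derive_Reals. unfold gw. auto_derive. lra.
  replace (w * ln c + - th) with (w * ln c - th) by ring. field. lra.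
Qed.

Lemma sin_lb_ge a : 0 <= a -> a <= 1 -> 4/5 * a <= sin a.
Proof.
  intros H0 H1. assert (1 <= PI) by (pose proof PI2_1; lra).
  destruct (sin_bound a 0 H0 ltac:(lra)) as [A _].
  unfold sin_approx, sin_term in A. simpl in A.
  nra.
Qed.

Lemma sin_abs_lb a : Rabs a <= 1 -> 4/5 * Rabs a <= Rabs (sin a).
Proof.
  intros H. destruct (Rle_dec 0 a).
  - rewrite Rabs_pos_eq in * by lra. pose proof (sin_lb_ge a r H).
    rewrite Rabs_pos_eq; lra.
  - rewrite Rabs_left in * by lra. pose proof (sin_lb_ge (-a) ltac:(lra) H).
    rewrite sin_neg in H0. rewrite Rabs_left1; lra.
Qed.

Lemma sin_key a b : Rabs a <= 1 -> Rabs (sin b) <= 1/2 ->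
  Rabs a <= 5/2 * (Rabs (sin (a + b)) + Rabs (sin b)).
Proof.
  intros Ha Hb. pose proof (sin_abs_lb a Ha) as S.
  rewrite sin_plus.
  pose proof (sin2_cos2 b) as E. unfold Rsqr in E.
  assert (Hc : 1/2 <= Rabs (cos b)).
  { apply abs_le in Hb. unfold Rabs; destruct (Rcase_abs (cos b)); nra. }
  assert (Hca : Rabs (cos a) <= 1) by (apply abs_le; apply COS_bound).
  assert (T : Rabs (sin a * cos b) <= Rabs (sin a * cos b + cos a * sin b) + Rabs (cos a * sin b)).
  { replace (sin a * cos b) with ((sin a * cos b + cos a * sin b) + (- (cos a * sin b))) at 1 by ring.
    rewrite <- (Rabs_Ropp (cos a * sin b)). apply Rabs_triang. }
  rewrite !Rabs_mult in T.
  pose proof (Rabs_pos (sin a)). pose proof (Rabs_pos (sin b)). pose proof (Rabs_pos (cos a)).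
  nra.
Qed.

Lemma sin_small t : 0 <= t -> t <= 1 -> Rabs (sin t) <= t.
Proof.
  intros H0 H1. assert (1 <= PI) by (pose proof PI2_1; lra).
  pose proof (sin_ge_0 t H0 ltac:(lra)). rewrite Rabs_pos_eq by lra.
  destruct (Req_dec t 0). subst. rewrite sin_0. lra.
  pose proof (sin_lt_x t ltac:(lra)). lra.
Qed.

Lemma gw_nonneg w th y : 0 <= y -> 0 <= gw w th y.
Proof. intros H. unfold gw. pose proof (SIN_bound (w * ln y - th)). nra. Qed.

Lemma gw_diff w th y : gw w th y - y = y * (/8 * sin (w * ln y - th)).
Proof. unfold gw. ring. Qed.

Lemma gw_mono w th y z : 0 < w <= 1 -> 0 <= z -> z <= y ->
  5/8 * (y - z) <= gw w th y - gw w th z <= 11/8 * (y - z).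
Proof.
  intros Hw Hz Hzy. destruct (Req_dec z y). { subst. lra. }
  destruct (Req_dec z 0).
  - subst. unfold gw at 2. rewrite Rmult_0_l. unfold gw.
    pose proof (SIN_bound (w * ln y - th)). split; nra.
  - destruct (MVT_cor2 (gw w th) (fun c => 1 + /8 * sin (w * ln c - th) + /8 * w * cos (w * ln c - th)) z y)
      as [c [Hc Hc']]; [lra| |].
    + intros c Hc. apply gw_deriv. lra.
    + rewrite Hc. pose proof (SIN_bound (w * ln c - th)). pose proof (COS_bound (w * ln c - th)).
      assert (5/8 <= 1 + /8 * sin (w * ln c - th) + /8 * w * cos (w * ln c - th) <= 11/8) by nra.
      split; nra.
Qed.

Lemma gw_lip w th y z : 0 < w <= 1 -> 0 <= y -> 0 <= z ->
  5/8 * Rabs (y - z) <= Rabs (gw w th y - gw w th z) <= 11/8 * Rabs (y - z).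
Proof.
  intros Hw Hy Hz. destruct (Rle_dec z y).
  - pose proof (gw_mono w th y z Hw Hz r). rewrite !Rabs_pos_eq by lra. lra.
  - pose proof (gw_mono w th z y Hw Hy ltac:(lra)).
    rewrite (Rabs_left1 (y - z)) by lra. rewrite Rabs_left1 by lra. lra.
Qed.

Lemma surj_disc (g : R -> R) L y : g 0 <= y ->
  (forall n : nat, Rabs (g (INR (S n)) - g (INR n)) <= L) ->
  forall n : nat, y < g (INR n) -> exists k : nat, Rabs (g (INR k) - y) <= L.
Proof.
  intros H0 HL n. induction n as [|n IH]; intros Hn.
  - simpl in Hn. lra.
  - destruct (Rlt_dec y (g (INR n))). auto.
    exists n. specialize (HL n). apply abs_le in HL. apply abs_le. lra.
Qed.

Lemma gw_QI w th : 0 < w <= 1 -> is_QI (gw w th).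
Proof.
  intros Hw. split. apply gw_nonneg.
  exists 2, 1, 2. split; [lra|]. split; [lra|]. split; [lra|]. split.
  - intros x y Hx Hy. pose proof (gw_lip w th x y Hw Hx Hy). pose proof (Rabs_pos (x-y)). lra.
  - intros y Hy.
    assert (Hg0 : gw w th 0 = 0) by (unfold gw; ring).
    destruct (nfloor_ex (2 * y) ltac:(lra)) as [n Hn].
    destruct (surj_disc (gw w th) 2 y ltac:(lra)) with (n := S n) as [k Hk].
    + intros m. pose proof (gw_lip w th (INR (S m)) (INR m) Hw (pos_INR _) (pos_INR _)).
      rewrite S_INR in *. replace (INR m + 1 - INR m) with 1 in H by ring. rewrite Rabs_R1 in H. lra.
    + pose proof (gw_mono w th (INR (S n)) 0 Hw (Rle_refl 0) (pos_INR _)). rewrite Hg0, S_INR in *. lra.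
    + exists (INR k). split; auto. apply pos_INR.
Qed.


Lemma key_theta f mu d m X0 w
 (Hfq : is_QI f)
 (Hli : forall x y, 0 <= x -> 0 <= y -> Rabs (f x - f y) <= mu * Rabs (x - y) + d)
 (Hmu : 1 <= mu) (Hd : 0 < d)
 (Hm : 1 <= m) (HX0 : 0 < X0) (Hgr : forall x, X0 <= x -> x / m <= f x <= m * x)
 (Hw : 0 < w <= 1) (Hw1 : forall x, X0 <= x -> Rabs (w * ln (f x) - w * ln x) <= 1)
 (Hc : forall g, is_QI g -> exists h, inN h /\
        qi_equiv (fun x => f (g x)) (fun x => g (f (h x))))
 tau (Ht : 0 < tau <= 1) th :
 exists X, forall x, X < x -> Rabs (sin (w * ln x - th)) <= tau / (8 * (m * mu + 1)) ->
   Rabs (w * ln (f x) - w * ln x) <= tau.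
Proof.
  destruct (Hc (gw w th) (gw_QI w th Hw)) as [h [Hh [C HC]]].
  assert (C0 : 0 <= C) by (eapply Rle_trans; [apply Rabs_pos|apply (HC 0); lra]).
  assert (Hmm : 1 <= m * mu) by nra.
  assert (Heta : 0 < tau / (80 * m * mu)) by (apply Rdiv_lt_0_compat; nra).
  destruct (N_sublin h Hh _ Heta) as [B [HB HhB]].
  set (eta := tau / (80 * m * mu)) in *.
  assert (Heta' : eta * (80 * m * mu) = tau) by (unfold eta; field; lra). clearbody eta.
  set (nu := tau / (8 * (m * mu + 1))).
  assert (Hnu' : nu * (8 * (m * mu + 1)) = tau) by (unfold nu; field; lra).
  assert (Hnu0 : 0 < nu) by (unfold nu; apply Rdiv_lt_0_compat; nra).
  clearbody nu.
  assert (HE : 0 <= 11/8 * (mu * B + d) + C + d) by nra.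
  remember (11/8 * (mu * B + d) + C + d) as E eqn:HEdef.
  assert (HmE : 0 <= m * E) by nra.
  exists (X0 + 1 + 60 * (m * E) / tau). intros x Hx Hs.
  assert (H60 : 0 <= 60 * (m * E) / tau) by (apply Rmult_le_pos; [lra| apply Rlt_le, Rinv_0_lt_compat; lra]).
  assert (HxX : 60 * (m * E) < tau * x).
  { assert (60 * (m * E) / tau * tau = 60 * (m * E)) by (field; lra). nra. }
  assert (Hx0 : X0 <= x) by lra.
  assert (Hxp : 0 < x) by lra.
  destruct (Hgr x Hx0) as [Hfl Hfu].
  assert (Hxm : x / m * m = x) by (field; lra).
  assert (Hfp : 0 < f x) by (assert (0 < x / m) by (apply Rdiv_lt_0_compat; lra); lra).
  pose proof (proj1 (proj1 Hh) x (Rlt_le _ _ Hxp)) as Hhx.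
  pose proof (proj1 Hfq _ Hhx) as Hfhx.
  pose proof (gw_nonneg w th x (Rlt_le _ _ Hxp)) as Hgx.
  set (S := Rabs (sin (w * ln (f x) - th))).
  assert (HS0 : 0 <= S) by apply Rabs_pos.
  assert (E1 : Rabs (gw w th (f x) - f x) = f x / 8 * S).
  { rewrite gw_diff, Rabs_mult, Rabs_mult, (Rabs_pos_eq (f x)) by lra.
    rewrite Rabs_pos_eq by lra. unfold S. field. }
  assert (E2 : Rabs (gw w th (f x) - gw w th (f (h x))) <= 11/8 * (mu * (eta * x + B) + d)).
  { pose proof (gw_lip w th (f x) (f (h x)) Hw (Rlt_le _ _ Hfp) Hfhx) as [_ G].
    specialize (Hli x (h x) (Rlt_le _ _ Hxp) Hhx).
    specialize (HhB x (Rlt_le _ _ Hxp)). rewrite Rabs_minus_sym in HhB.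
    assert (mu * Rabs (x - h x) <= mu * (eta * x + B)) by (apply Rmult_le_compat_l; lra).
    lra. }
  specialize (HC x (Rlt_le _ _ Hxp)).
  assert (E4 : Rabs (f (gw w th x) - f x) <= mu * (x * (/8 * nu)) + d).
  { specialize (Hli (gw w th x) x Hgx (Rlt_le _ _ Hxp)).
    rewrite gw_diff, Rabs_mult, Rabs_mult, (Rabs_pos_eq x) in Hli by lra.
    rewrite (Rabs_pos_eq (/8)) in Hli by lra.
    assert (x * (/8 * Rabs (sin (w * ln x - th))) <= x * (/8 * nu)) by (apply Rmult_le_compat_l; lra).
    assert (mu * (x * (/8 * Rabs (sin (w * ln x - th)))) <= mu * (x * (/8 * nu))) by (apply Rmult_le_compat_l; lra).
    lra. }
  assert (Tri : Rabs (gw w th (f x) - f x) <=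
     Rabs (gw w th (f x) - gw w th (f (h x))) + Rabs (f (gw w th x) - gw w th (f (h x)))
     + Rabs (f (gw w th x) - f x)).
  { replace (gw w th (f x) - f x) with ((gw w th (f x) - gw w th (f (h x))) - (f (gw w th x) - gw w th (f (h x))) + (f (gw w th x) - f x)) by ring.
    eapply Rle_trans. apply Rabs_triang. rewrite <- (Rabs_Ropp (f (gw w th x) - gw w th (f (h x)))).
    pose proof (Rabs_triang (gw w th (f x) - gw w th (f (h x))) (- (f (gw w th x) - gw w th (f (h x))))) as T.
    replace (gw w th (f x) - gw w th (f (h x)) + - (f (gw w th x) - gw w th (f (h x)))) with
      (gw w th (f x) - gw w th (f (h x)) - (f (gw w th x) - gw w th (f (h x)))) in T by ring. lra. }
  assert (Main : f x / 8 * S <= 11/8 * mu * eta * x + mu * x * nu / 8 + E).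
  { lra. }
  assert (Main2 : x / m / 8 * S <= 11/8 * mu * eta * x + mu * x * nu / 8 + E).
  { assert (x / m / 8 * S <= f x / 8 * S) by (apply Rmult_le_compat_r; lra). lra. }
  assert (SB : S * x <= (11 * m * mu * eta + m * mu * nu) * x + 8 * (m * E)).
  { assert (m * (x / m / 8 * S) <= m * (11/8 * mu * eta * x + mu * x * nu / 8 + E)) by (apply Rmult_le_compat_l; lra).
    replace (m * (x / m / 8 * S)) with (S * x / 8) in H by (field; lra). lra. }
  assert (Hw1x := Hw1 x Hx0).
  assert (Hsb : Rabs (sin (w * ln x - th)) <= 1/2).
  { assert (nu <= 1/16) by nra. lra. }
  pose proof (sin_key (w * ln (f x) - w * ln x) (w * ln x - th) Hw1x Hsb) as K.
  replace (w * ln (f x) - w * ln x + (w * ln x - th)) with (w * ln (f x) - th) in K by ring.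
  fold S in K.
  assert (Fin : 5/2 * (S + nu) * x < tau * x).
  { assert (11 * m * mu * eta = 11 / 80 * tau) by (rewrite <- Heta'; field; lra).
    assert ((m * mu + 1) * nu = tau / 8) by lra.
    nra. }
  assert (5/2 * (S + nu) < tau) by nra.
  lra.
Qed.

Lemma fin_ev (P : nat -> R -> Prop) :
  (forall j, exists X, forall x, X < x -> P j x) ->
  forall N, exists X, forall x, X < x -> forall j, (j <= N)%nat -> P j x.
Proof.
  intros H N. induction N as [|N IH].
  - destruct (H 0%nat) as [X HX]. exists X. intros x Hx j Hj.
    assert (j = 0%nat) by lia. subst. auto.
  - destruct IH as [X1 H1]. destruct (H (S N)) as [X2 H2].
    exists (Rmax X1 X2). intros x Hx j Hj. apply max_lt in Hx as [A B].
    destruct (Nat.eq_dec j (S N)). subst; auto. apply H1; auto. lia.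
Qed.

Lemma grid nu : 0 < nu <= 1/16 -> exists N : nat, forall u, 0 < u ->
  exists j, (j <= N)%nat /\ Rabs (sin (u - INR j * nu)) <= nu.
Proof.
  intros Hnu. pose proof PI_RGT_0 as Hpi.
  assert (H2 : 0 <= 2 * PI / nu) by (apply Rlt_le, Rdiv_lt_0_compat; lra).
  destruct (nfloor_ex _ H2) as [N HN]. exists N. intros u Hu.
  assert (H3 : 0 <= u / (2 * PI)) by (apply Rlt_le, Rdiv_lt_0_compat; lra).
  destruct (nfloor_ex _ H3) as [n Hn].
  set (r := u - 2 * INR n * PI).
  assert (Hr : 0 <= r < 2 * PI).
  { unfold r. destruct Hn as [A B].
    assert (u / (2*PI) * (2*PI) = u) by (field; lra). split; nra. }
  assert (H4 : 0 <= r / nu) by (apply Rmult_le_pos; [lra| apply Rlt_le, Rinv_0_lt_compat; lra]).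
  destruct (nfloor_ex _ H4) as [j Hj]. exists j.
  assert (E1 : r / nu * nu = r) by (field; lra).
  assert (E2 : 2 * PI / nu * nu = 2 * PI) by (field; lra).
  split.
  - assert (INR j < INR (S N)).
    { rewrite S_INR. destruct Hj. assert (r / nu < 2 * PI / nu).
      { unfold Rdiv. apply Rmult_lt_compat_r. apply Rinv_0_lt_compat; lra. lra. }
      lra. }
    apply INR_lt in H. lia.
  - replace (u - INR j * nu) with ((r - INR j * nu) + 2 * INR n * PI) by (unfold r; ring).
    rewrite sin_period. destruct Hj as [A B].
    assert (INR j * nu <= r) by nra. assert (r < INR j * nu + nu) by nra.
    eapply Rle_trans. apply sin_small; lra. lra.
Qed.

Lemma exp_near s : Rabs s <= 1/2 -> Rabs (exp s - 1) <= 2 * Rabs s.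
Proof.
  intros Hs. apply abs_le in Hs.
  pose proof (exp_ineq1_le s) as A. pose proof (exp_ineq1_le (-s)) as B.
  assert (C : exp s * exp (-s) = 1) by (rewrite <- exp_plus; replace (s + - s) with 0 by ring; apply exp_0).
  pose proof (exp_pos s).
  unfold Rabs at 2; destruct (Rcase_abs s); apply abs_le; split; nra.
Qed.

Lemma part6 f : is_QI f ->
  (forall g, is_QI g -> exists h, inN h /\ qi_equiv (fun x => f (g x)) (fun x => g (f (h x)))) ->
  inN f.
Proof.
  intros Hfq Hc. split; auto.
  destruct (QI_lip f Hfq) as [mu [d [Hmu [Hd Hli]]]].
  destruct (QI_growth f Hfq) as [m [X0 [Hm [HX0 Hgr]]]].
  assert (Hlm : 0 <= ln m) by (rewrite <- ln_1; apply ln_le; lra).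
  set (w := / (ln m + 1)).
  assert (HwL : w * (ln m + 1) = 1) by (unfold w; field; lra).
  assert (Hw : 0 < w <= 1).
  { split. unfold w; apply Rinv_0_lt_compat; lra. nra. }
  clearbody w.
  assert (Hw1 : forall x, X0 <= x -> Rabs (w * ln (f x) - w * ln x) <= 1).
  { intros x Hx. destruct (Hgr x Hx) as [A B].
    assert (0 < x / m) by (apply Rdiv_lt_0_compat; lra).
    assert (L1 : ln (f x) <= ln m + ln x) by (rewrite <- ln_mult by lra; apply ln_le; lra).
    assert (L2 : ln x - ln m <= ln (f x)) by (rewrite <- ln_div by lra; apply ln_le; lra).
    replace (w * ln (f x) - w * ln x) with (w * (ln (f x) - ln x)) by ring.
    apply abs_le. split; nra. }
  assert (Claim : forall tau, 0 < tau <= 1 -> exists X, forall x, X < x ->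
            Rabs (w * ln (f x) - w * ln x) <= tau).
  { intros tau Ht.
    assert (Hmm : 1 <= m * mu) by nra.
    set (nu := tau / (8 * (m * mu + 1))).
    assert (Hnu' : nu * (8 * (m * mu + 1)) = tau) by (unfold nu; field; lra).
    assert (Hnu : 0 < nu <= 1/16).
    { split. unfold nu; apply Rdiv_lt_0_compat; nra. nra. }
    destruct (grid nu Hnu) as [N HN].
    destruct (fin_ev (fun j x => Rabs (sin (w * ln x - INR j * nu)) <= nu ->
                 Rabs (w * ln (f x) - w * ln x) <= tau)) with (N := N) as [X HX].
    { intros j. apply (key_theta f mu d m X0 w Hfq Hli Hmu Hd Hm HX0 Hgr Hw Hw1 Hc tau Ht). }
    exists (Rmax X 1). intros x Hx. apply max_lt in Hx as [A B].
    assert (0 < ln x) by (rewrite <- ln_1; apply ln_increasing; lra).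
    destruct (HN (w * ln x)) as [j [Hj Hs]]. nra.
    apply (HX x A j Hj Hs). }
  rewrite lim1_iff. intros eps He.
  set (t := Rmin (eps/4) (1/2)).
  assert (Ht : 0 < t <= 1/2) by (unfold t; split; [apply Rmin_glb_lt; lra | apply Rmin_r]).
  assert (Ht4 : t <= eps / 4) by apply Rmin_l. clearbody t.
  destruct (Claim (w * t)) as [X HX]. nra.
  exists (Rmax X X0). intros x Hx. apply max_lt in Hx as [A B].
  specialize (HX x A). destruct (Hgr x ltac:(lra)) as [G1 G2].
  assert (0 < x / m) by (apply Rdiv_lt_0_compat; lra).
  assert (Hfx : 0 < f x) by lra.
  replace (w * ln (f x) - w * ln x) with (w * ln (f x / x)) in HX by (rewrite ln_div by lra; ring).
  rewrite Rabs_mult, (Rabs_pos_eq w) in HX by lra.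
  assert (Hs : Rabs (ln (f x / x)) <= t).
  { apply Rmult_le_reg_l with w; lra. }
  rewrite <- (exp_ln (f x / x)) by (apply Rdiv_lt_0_compat; lra).
  pose proof (exp_near (ln (f x / x)) ltac:(lra)). lra.
Qed.

Theorem mainTheorem7 :
  (forall f g, inN f -> is_QI g -> qi_equiv g f -> inN g) /\
  inN (fun x => x) /\
  (forall f g, inN f -> inN g -> inN (fun x => f (g x))) /\
  (forall f g, inN f -> qi_inverse g f -> inN g) /\
  (forall f f' h, is_QI f -> qi_inverse f' f -> inN h ->
     inN (fun x => f (h (f' x)))) /\
  (forall f, is_QI f ->
     (forall g, is_QI g ->
        exists h, inN h /\ qi_equiv (fun x => f (g x)) (fun x => g (f (h x)))) ->
     inN f).
Proof.
  split. exact part1. split. exact part2. split. exact part3. split. exact part4.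
  split. exact part5. exact part6.
Qed.
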